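(* Let $n\ge3$. Then $\mathcal{PI}^{\ast}_n$ is generated as a semigroup by $\mathcal{S}_n\cup\{\gamma_{1,2},\gamma_{1,2}^{-1}\}$.
   Context: Let $X=\{1,\dots,n\}$, $X'=\{1',\dots,n'\}$. $\mathcal{PI}^{\ast}_n$ is the set of partitions of $X\cup X'$ each of whose blocks is a singleton (point) or a generalised line (a set meeting both $X$ and $X'$), with product $\star$: with $X''$ a third copy of $X$, regard $\alpha$ as a partition of $X\cup X''$ and $\beta$ as a partition of $X''\cup X'$, let $\sim$ be the equivalence on $X\cup X''\cup X'$ generated by the blocks of both; $\alpha\star\beta$ is the partition of $X\cup X'$ in which distinct $u,v$ are in one block iff $u\sim v$ and the $\sim$-class of $u$ contains no singleton block of $\alpha$ or $\beta$. $\mathcal{S}_n$ is the group of units (elements all of whose blocks are $\{x,\pi(x)'\}$, $\pi$ a permutation). $\gamma_{1,2}$ has blocks $\{1,2,1'\}$, $\{2'\}$ and $\{t,t'\}$ for $3\le t\le n$; $\gamma_{1,2}^{-1}$ has blocks $\{1,1',2'\}$, $\{2\}$ and $\{t,t'\}$ for $3\le t\le n$. *)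

(* Defs.v *)
From mathcomp Require Import all_boot fingroup perm.
Set Implicit Arguments. Unset Strict Implicit. Unset Printing Implicit Defensive.

(* Ground set X ∪ X' : inl x = x ∈ X, inr x = x' ∈ X' (points 1..n are 'I_n, 0-based). *)
Definition pt (n : nat) := ('I_n + 'I_n)%type.

Definition PIpart (n : nat) := {set {set pt n}}.

Definition isPIstar (n : nat) (a : PIpart n) : Prop :=
  partition a [set: pt n] /\
  forall B, B \in a ->
    #|B| = 1 \/ ((exists x : 'I_n, inl x \in B) /\ (exists y : 'I_n, inr y \in B)).

(* Three copies X (level 0), X'' (level 1), X' (level 2). *)
Definition pt3 (n : nat) := ('I_n * 'I_3)%type.
Definition lev0 : 'I_3 := @Ordinal 3 0 isT.
Definition lev1 : 'I_3 := @Ordinal 3 1 isT.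
Definition lev2 : 'I_3 := @Ordinal 3 2 isT.

(* alpha is regarded as a partition of X ∪ X'' *)
Definition embL n (u : pt n) : pt3 n :=
  match u with inl x => (x, lev0) | inr x => (x, lev1) end.
(* beta is regarded as a partition of X'' ∪ X' *)
Definition embR n (u : pt n) : pt3 n :=
  match u with inl x => (x, lev1) | inr x => (x, lev2) end.
(* the outer X ∪ X' of the product *)
Definition embO n (u : pt n) : pt3 n :=
  match u with inl x => (x, lev0) | inr x => (x, lev2) end.

Definition edge n (a b : PIpart n) : rel (pt3 n) := fun w z =>
  [exists B in a, (w \in (@embL n) @: B) && (z \in (@embL n) @: B)] ||
  [exists B in b, (w \in (@embR n) @: B) && (z \in (@embR n) @: B)].

Definition sim n (a b : PIpart n) : rel (pt3 n) := connect (edge a b).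

Definition badclass n (a b : PIpart n) (w : pt3 n) : bool :=
  [exists B in a, (#|B| == 1) && [exists v in B, sim a b w (embL v)]] ||
  [exists B in b, (#|B| == 1) && [exists v in B, sim a b w (embR v)]].

Definition starR n (a b : PIpart n) (u v : pt n) : bool :=
  (u == v) || (sim a b (embO u) (embO v) && ~~ badclass a b (embO u)).

Definition star n (a b : PIpart n) : PIpart n :=
  [set [set v | starR a b u v] | u : pt n].

Definition unitS n (s : {perm 'I_n}) : PIpart n :=
  [set [set (inl x : pt n); inr (s x)] | x : 'I_n].

(* gamma_{1,2}: blocks {1,2,1'}, {2'}, {t,t'} (t >= 3); 0-based indices *)
Definition gblock n (u : pt n) : bool :=
  match u with inl x => (x < 2)%N | inr x => (x == 0 :> nat) end.
Definition gamma12 n : PIpart n :=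
  [set [set u | gblock u]] :|:
  [set [set (inr x : pt n)] | x : 'I_n & (x == 1 :> nat)] :|:
  [set [set (inl t : pt n); inr t] | t : 'I_n & (2 <= t)%N].

(* gamma_{1,2}^{-1}: blocks {1,1',2'}, {2}, {t,t'} (t >= 3) *)
Definition gblockinv n (u : pt n) : bool :=
  match u with inl x => (x == 0 :> nat) | inr x => (x < 2)%N end.
Definition gamma12inv n : PIpart n :=
  [set [set u | gblockinv u]] :|:
  [set [set (inl x : pt n)] | x : 'I_n & (x == 1 :> nat)] :|:
  [set [set (inl t : pt n); inr t] | t : 'I_n & (2 <= t)%N].

Definition gens n (a : PIpart n) : Prop :=
  (exists s : {perm 'I_n}, a = unitS s) \/ a = gamma12 n \/ a = gamma12inv n.

Inductive gen n (G : PIpart n -> Prop) : PIpart n -> Prop :=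
| gen_base a : G a -> gen G a
| gen_mul a b : gen G a -> gen G b -> gen G (star a b).

(* Main.v *)
Require Import Defs.
From mathcomp Require Import all_boot fingroup perm zify.
Set Implicit Arguments. Unset Strict Implicit. Unset Printing Implicit Defensive.


Section Eqv.
Variable X : Type.
Lemma eqv_refl (r : rel X) : equivalence_rel r -> forall x, r x x.
Proof. by move=> H x; case: (H x x x). Qed.
Lemma eqv_sym (r : rel X) : equivalence_rel r -> forall x y, r x y -> r y x.
Proof. by move=> H x y rxy; case: (H x y x) => rxx /(_ rxy) <-. Qed.
Lemma eqv_trans (r : rel X) : equivalence_rel r -> forall x y z, r x y -> r y z -> r x z.
Proof. by move=> H x y z rxy; case: (H x y z) => _ /(_ rxy) ->. Qed.
Lemma eqv_symE (r : rel X) : equivalence_rel r -> forall x y, r x y = r y x.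
Proof. by move=> H x y; apply/idP/idP; apply: eqv_sym. Qed.
End Eqv.

Section Basics.
Variable n : nat.
Local Notation T := (pt n).
Local Notation T3 := (pt3 n).

Definition ofRel (r : rel T) : PIpart n := [set [set v | r u v] | u : T].
Definition singR (r : rel T) (u : T) : bool := [forall v, r u v ==> (v == u)].
Definition PIrel (r : rel T) : Prop :=
  forall u, singR r u || ([exists x, r u (inl x)] && [exists y, r u (inr y)]).

Lemma card_cls1 (r : rel T) u : equivalence_rel r -> (#|[set v | r u v]| == 1) = singR r u.
Proof.
move=> H; apply/cards1P/forallP.
  case=> x0 E v; apply/implyP => ruv.
  have : v \in [set v | r u v] by rewrite inE.
  have : u \in [set v | r u v] by rewrite inE eqv_refl.
  by rewrite E !inE => /eqP -> /eqP ->.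
move=> S; exists u; apply/setP => v; rewrite !inE.
apply/idP/eqP => [ruv | ->]; last exact: eqv_refl.
by have /implyP /(_ ruv) /eqP := S v.
Qed.

Lemma singR_eq (r : rel T) u v : singR r u -> r u v -> v = u.
Proof. by move=> /forallP /(_ v) /implyP H /H /eqP. Qed.

Lemma ofRel_ep (r : rel T) : ofRel r = equivalence_partition r [set: T].
Proof.
apply/setP => B; apply/imsetP/imsetP => -[u _ ->]; exists u => //;
  by apply/setP => v; rewrite !inE.
Qed.

Lemma isPI_ofRel (r : rel T) : equivalence_rel r -> PIrel r -> isPIstar (ofRel r).
Proof.
move=> H HP; split.
  rewrite ofRel_ep; apply: equivalence_partitionP => x y z _ _ _; exact: H.
move=> B /imsetP [u _ ->].
case/orP: (HP u) => [S | /andP [/existsP [x Hx] /existsP [y Hy]]].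
  by left; apply/eqP; rewrite card_cls1.
by right; split; [exists x | exists y]; rewrite inE.
Qed.

Definition same (a : PIpart n) : rel T := fun u v => v \in pblock a u.

Lemma isPI_rel a : isPIstar a ->
  [/\ a = ofRel (same a), equivalence_rel (same a) & PIrel (same a)].
Proof.
case=> Hp HB.
have Heq : equivalence_rel (same a).
  by move=> x y z; apply: (pblock_equivalence Hp); rewrite inE.
split => //.
  by rewrite ofRel_ep -{1}(equivalence_partition_pblock Hp).
move=> u.
have Hc : u \in cover a by rewrite (cover_partition Hp) inE.
have Pu : pblock a u \in a by apply: pblock_mem.
have E : pblock a u = [set v | same a u v] by apply/setP => v; rewrite inE.
case: (HB _ Pu) => [C | [[x Hx] [y Hy]]].
  by rewrite -card_cls1 // -E C.
apply/orP; right; apply/andP; split; [apply/existsP; exists x | apply/existsP; exists y]; done.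
Qed.

Lemma same_ofRel (r : rel T) : equivalence_rel r -> same (ofRel r) =2 r.
Proof.
move=> H u v; rewrite /same ofRel_ep pblock_equivalence_partition ?inE // => x y z _ _ _; exact: H.
Qed.

Lemma ofRel_ext (r r' : rel T) : r =2 r' -> ofRel r = ofRel r'.
Proof.
move=> E; apply/setP => B; apply/imsetP/imsetP => -[u _ ->]; exists u => //;
  by apply/setP => v; rewrite !inE E.
Qed.

End Basics.


Section SimGen.
Variable n : nat.
Local Notation T := (pt n).
Local Notation T3 := (pt3 n).

Lemma edge_sym (a b : PIpart n) : symmetric (edge a b).
Proof.
move=> w z; rewrite /edge.
congr orb; apply/existsP/existsP => -[B /andP [aB /andP [H1 H2]]]; exists B; by rewrite aB H1 H2.
Qed.

Lemma sim_refl (a b : PIpart n) w : sim a b w w.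
Proof. exact: connect0. Qed.
Lemma sim_sym (a b : PIpart n) w z : sim a b w z = sim a b z w.
Proof. exact: (sym_connect_sym (@edge_sym a b)). Qed.
Lemma sim_trans (a b : PIpart n) w y z : sim a b w y -> sim a b y z -> sim a b w z.
Proof. exact: connect_trans. Qed.

Lemma badclass_sim (a b : PIpart n) w z : sim a b w z -> badclass a b w = badclass a b z.
Proof.
move=> H.
have E : forall y, sim a b w y = sim a b z y.
  move=> y; apply/idP/idP => H'; last exact: sim_trans H H'.
  by apply: sim_trans H'; rewrite sim_sym.
rewrite /badclass; congr orb; apply: eq_existsb => B; congr andb; congr andb;
  apply: eq_existsb => v; by rewrite E.
Qed.

Variables Ra Rb : rel T.
Hypothesis HRa : equivalence_rel Ra.
Hypothesis HRb : equivalence_rel Rb.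
Local Notation a := (ofRel Ra).
Local Notation b := (ofRel Rb).

Lemma edge_ofRel w z : edge a b w z ->
  (exists u v, [/\ w = embL u, z = embL v & Ra u v]) \/
  (exists u v, [/\ w = embR u, z = embR v & Rb u v]).
Proof.
case/orP => /existsP [B /andP [/imsetP [u0 _ ->] /andP [/imsetP [u Hu ->] /imsetP [v Hv ->]]]].
  left; exists u, v; split => //; move: Hu Hv; rewrite !inE => Hu Hv.
  exact: (eqv_trans HRa (eqv_sym HRa Hu) Hv).
right; exists u, v; split => //; move: Hu Hv; rewrite !inE => Hu Hv.
exact: (eqv_trans HRb (eqv_sym HRb Hu) Hv).
Qed.

Lemma simL u v : Ra u v -> sim a b (embL u) (embL v).
Proof.
move=> H; apply: connect1; apply/orP; left; apply/existsP; exists [set x | Ra u x].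
rewrite imset_f //=; apply/andP; split; apply: imset_f; rewrite inE //; exact: eqv_refl.
Qed.

Lemma simR u v : Rb u v -> sim a b (embR u) (embR v).
Proof.
move=> H; apply: connect1; apply/orP; right; apply/existsP; exists [set x | Rb u x].
rewrite imset_f //=; apply/andP; split; apply: imset_f; rewrite inE //; exact: eqv_refl.
Qed.

Lemma badclassE w : badclass a b w =
  [exists v, singR Ra v && sim a b w (embL v)] || [exists v, singR Rb v && sim a b w (embR v)].
Proof.
rewrite /badclass; congr orb; apply/existsP/existsP.
- case=> B /andP [/imsetP [u0 _ ->] /andP [C /existsP [v /andP [Hv S]]]].
  exists v; rewrite S andbT -card_cls1 //.
  suff -> : [set x | Ra v x] = [set x | Ra u0 x] by [].
  apply/setP => x; rewrite !inE; move: Hv; rewrite inE => Hv.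
  by apply/idP/idP => H; [exact: (eqv_trans HRa Hv H) | exact: (eqv_trans HRa (eqv_sym HRa Hv) H)].
- case=> v /andP [C S]; exists [set x | Ra v x]; rewrite imset_f //= card_cls1 // C /=.
  by apply/existsP; exists v; rewrite inE S eqv_refl.
- case=> B /andP [/imsetP [u0 _ ->] /andP [C /existsP [v /andP [Hv S]]]].
  exists v; rewrite S andbT -card_cls1 //.
  suff -> : [set x | Rb v x] = [set x | Rb u0 x] by [].
  apply/setP => x; rewrite !inE; move: Hv; rewrite inE => Hv.
  by apply/idP/idP => H; [exact: (eqv_trans HRb Hv H) | exact: (eqv_trans HRb (eqv_sym HRb Hv) H)].
- case=> v /andP [C S]; exists [set x | Rb v x]; rewrite imset_f //= card_cls1 // C /=.
  by apply/existsP; exists v; rewrite inE S eqv_refl.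
Qed.

Lemma sim_char (X : Type) (Q : rel X) (rho : T3 -> X) (rep : T3 -> T3) :
  equivalence_rel Q ->
  (forall u v, Ra u v -> Q (rho (embL u)) (rho (embL v))) ->
  (forall u v, Rb u v -> Q (rho (embR u)) (rho (embR v))) ->
  (forall w, sim a b w (rep w)) ->
  (forall w z, Q (rho w) (rho z) -> sim a b (rep w) (rep z)) ->
  forall w z, sim a b w z = Q (rho w) (rho z).
Proof.
move=> HQ HA HB Hrep Hcon w z; apply/idP/idP; last first.
  move=> /Hcon H; apply: sim_trans (Hrep w) _; apply: sim_trans H _.
  by rewrite sim_sym.
case/connectP => p; elim: p w => [|y p IH] w /=; first by move=> _ ->; apply: eqv_refl.
case/andP => E Hp Hz; apply: (eqv_trans HQ _ (IH _ Hp Hz)).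
by case: (edge_ofRel E) => -[u [v [-> -> H]]]; [apply: HA | apply: HB].
Qed.

Definition starRel := starR a b.

End SimGen.


Section Sound.
Variable n : nat.
Local Notation T := (pt n).
Local Notation T3 := (pt3 n).

Lemma starR_equiv (a b : PIpart n) : equivalence_rel (starR a b).
Proof.
move=> x y z; split; first by rewrite /starR eqxx.
rewrite /starR; case/orP => [/eqP -> //| /andP [Sxy Bx]].
have Bxy := badclass_sim Sxy.
have Hxz : sim a b (embO x) (embO z) = sim a b (embO y) (embO z).
  apply/idP/idP => H; first by apply: sim_trans H; rewrite sim_sym.
  exact: sim_trans Sxy H.
rewrite Hxz -Bxy (negbTE Bx) /= !andbT.
case: (eqVneq x z) => [<-|_]; first by rewrite sim_sym Sxy !orbT.
case: (eqVneq y z) => [<-|_] /=; last by [].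
by rewrite sim_refl.
Qed.

Lemma embOl (x : 'I_n) : embO (inl x : T) = embL (inl x : T). Proof. by []. Qed.
Lemma embOr (x : 'I_n) : embO (inr x : T) = embR (inr x : T). Proof. by []. Qed.
Lemma embLR (x : 'I_n) : embL (inr x : T) = embR (inl x : T). Proof. by []. Qed.

Lemma starR_PI (Ra Rb : rel T) : equivalence_rel Ra -> equivalence_rel Rb ->
  PIrel Ra -> PIrel Rb -> PIrel (starR (ofRel Ra) (ofRel Rb)).
Proof.
move=> HA HB PA PB u.
set a := ofRel Ra; set b := ofRel Rb.
case Bu: (badclass a b (embO u)).
  by apply/orP; left; apply/forallP => v; apply/implyP; rewrite /starR Bu andbF orbF eq_sym.
have Sv : forall v, sim a b (embO u) (embO v) -> starR a b u v.
  by move=> v H; rewrite /starR H Bu orbT.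
apply/orP; right.
case: u Bu Sv => [x|z] Bu Sv.
- have [y Hy] : exists y, Ra (inl x) (inr y).
    case/orP: (PA (inl x)) => [S | /andP [_ /existsP [y Hy]]]; last by exists y.
    move: Bu; rewrite badclassE // => /negP []; apply/orP; left.
    by apply/existsP; exists (inl x); rewrite S sim_refl.
  have S1 : sim a b (embO (inl x)) (embR (inl y)) by rewrite embOl -embLR; apply: (simL Rb HA).
  have [z Hz] : exists z, Rb (inl y) (inr z).
    case/orP: (PB (inl y)) => [S | /andP [_ /existsP [z Hz]]]; last by exists z.
    move: Bu; rewrite badclassE // => /negP []; apply/orP; right.
    by apply/existsP; exists (inl y); rewrite S S1.
  apply/andP; split; apply/existsP; first by exists x; rewrite /starR eqxx.
  exists z; apply: Sv; rewrite embOr; apply: sim_trans S1 _; exact: (simR Ra HB).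
- have [y Hy] : exists y, Rb (inr z) (inl y).
    case/orP: (PB (inr z)) => [S | /andP [/existsP [y Hy] _]]; last by exists y.
    move: Bu; rewrite badclassE // => /negP []; apply/orP; right.
    by apply/existsP; exists (inr z); rewrite S sim_refl.
  have S1 : sim a b (embO (inr z)) (embL (inr y)) by rewrite embOr embLR; apply: (simR Ra HB).
  have [x Hx] : exists x, Ra (inr y) (inl x).
    case/orP: (PA (inr y)) => [S | /andP [/existsP [x Hx] _]]; last by exists x.
    move: Bu; rewrite badclassE // => /negP []; apply/orP; left.
    by apply/existsP; exists (inr y); rewrite S S1.
  apply/andP; split; apply/existsP; last by exists z; rewrite /starR eqxx.
  exists x; apply: Sv; rewrite embOl; apply: sim_trans S1 _; exact: (simL Rb HA).
Qed.

Lemma star_ofRel (Ra Rb : rel T) : star (ofRel Ra) (ofRel Rb) = ofRel (starR (ofRel Ra) (ofRel Rb)).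
Proof. by []. Qed.

Lemma star_PI (a b : PIpart n) : isPIstar a -> isPIstar b -> isPIstar (star a b).
Proof.
case/isPI_rel => Ea HA PA; case/isPI_rel => Eb HB PB.
rewrite Ea Eb star_ofRel; apply: isPI_ofRel; first exact: starR_equiv.
exact: starR_PI.
Qed.

End Sound.


Section Gens.
Variable n : nat.
Local Notation T := (pt n).

Lemma eq_ll (x y : 'I_n) : (inl x == inl y :> T) = (x == y).
Proof. by apply/eqP/eqP => [[]|->]. Qed.
Lemma eq_rr (x y : 'I_n) : (inr x == inr y :> T) = (x == y).
Proof. by apply/eqP/eqP => [[]|->]. Qed.
Lemma eq_lr (x y : 'I_n) : (inl x == inr y :> T) = false.
Proof. by []. Qed.
Lemma eq_rl (x y : 'I_n) : (inr x == inl y :> T) = false.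
Proof. by []. Qed.
Lemma eq_val (x y : 'I_n) : (nat_of_ord x == nat_of_ord y) = (x == y).
Proof. by []. Qed.

Definition kerR (k : T -> nat) : rel T := fun u v => k u == k v.
Lemma kerR_equiv k : equivalence_rel (kerR k).
Proof. by move=> x y z; rewrite /kerR eqxx; split => // /eqP ->. Qed.

Lemma ofRel_eqI (P : PIpart n) (r : rel T) (cl : T -> {set T}) :
  (forall u, cl u = [set v | r u v]) -> (forall B, B \in P -> exists u, B = cl u) ->
  (forall u, cl u \in P) -> P = ofRel r.
Proof.
move=> E H1 H2; apply/setP => B; apply/idP/imsetP => [/H1 [u ->]| [u _ ->]].
  by exists u; rewrite ?E.
by rewrite -E.
Qed.

Definition kU (s : {perm 'I_n}) (u : T) : nat :=
  match u with inl x => s x | inr y => y end.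

Lemma unitS_ofRel (s : {perm 'I_n}) : unitS s = ofRel (kerR (kU s)).
Proof.
pose cl (u : T) : {set T} := match u with
  | inl x => [set inl x; inr (s x)]
  | inr y => [set inl (s^-1 y)%g; inr (s (s^-1 y)%g)] end.
apply: (@ofRel_eqI _ _ cl).
- move=> u; apply/setP => v.
  case: u => [x|y]; case: v => [x'|y']; rewrite !inE /kerR /=.
  + by rewrite eq_ll eq_lr orbF eq_val (inj_eq perm_inj) eq_sym.
  + by rewrite eq_rr eq_val eq_sym.
  + rewrite eq_ll eq_lr orbF eq_val; apply/eqP/eqP => [->|->]; by rewrite ?permK ?permKV.
  + by rewrite permKV eq_rr eq_val.
- by move=> B /imsetP [x _ ->]; exists (inl x).
- by case=> [x|y]; apply: imset_f.
Qed.

Lemma PIrel_ker (k : T -> nat) :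
  (forall u, [forall v, (k u == k v) ==> (v == u)] ||
     ([exists x, k u == k (inl x)] && [exists y, k u == k (inr y)])) -> PIrel (kerR k).
Proof. by []. Qed.

Lemma unitS_PI (s : {perm 'I_n}) : isPIstar (unitS s).
Proof.
rewrite unitS_ofRel; apply: isPI_ofRel; first exact: kerR_equiv.
move=> u; apply/orP; right; rewrite /kerR.
case: u => [x|y] /=; apply/andP; split; apply/existsP.
- by exists x.
- by exists (s x).
- by exists (s^-1 y)%g; rewrite /= permKV.
- by exists y.
Qed.

End Gens.


Section Gam.
Variable n : nat.
Hypothesis hn : 0 < n.
Local Notation T := (pt n).
Definition o0 : 'I_n := Ordinal hn.

Definition kG (u : T) : nat := match u with inl x => if x < 2 then 0 else x | inr y => y end.
Definition kGi (u : T) : nat := match u with inl x => x | inr y => if y < 2 then 0 else y end.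

Lemma gamma12_ofRel : gamma12 n = ofRel (kerR kG).
Proof.
pose big : {set T} := [set u | gblock u].
pose cl (u : T) : {set T} := match u with
  | inl x => if x < 2 then big else [set inl x; inr x]
  | inr y => if y == 0 :> nat then big else if y == 1 :> nat then [set inr y] else [set inl y; inr y] end.
apply: (@ofRel_eqI _ _ _ cl).
- move=> u; apply/setP => v.
  case: u => [x|y]; case: v => [x'|y']; rewrite /cl /big /kerR /kG /=;
    repeat case: ifP => ?; rewrite !inE /= ?eq_ll ?eq_rr ?eq_lr ?eq_rl ?orbF -?eq_val;
    repeat case: ifP => ?; first [done | apply/idP/idP => ?; lia].
- move=> B; rewrite !inE => /orP [/orP [/eqP -> | /imsetP [x Hx ->]] | /imsetP [t Ht ->]].
  + by exists (inr o0); rewrite /cl /=.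
  + exists (inr x); rewrite /cl /=; move: Hx; rewrite inE => /eqP ->; done.
  + exists (inl t); rewrite /cl /=; move: Ht; rewrite inE; case: ifP => //; lia.
- case=> [x|y]; rewrite /cl /=.
  + case: ifP => h; rewrite !inE; first by rewrite eqxx.
    apply/orP; right; apply/imsetP; exists x => //; rewrite inE; lia.
  + case: ifP => h0; rewrite !inE; first by rewrite eqxx.
    case: ifP => h1.
    * apply/orP; left; apply/orP; right; apply/imsetP; exists y => //; by rewrite inE.
    * apply/orP; right; apply/imsetP; exists y => //; rewrite inE; lia.
Qed.

Lemma gamma12inv_ofRel : gamma12inv n = ofRel (kerR kGi).
Proof.
pose big : {set T} := [set u | gblockinv u].
pose cl (u : T) : {set T} := match u with
  | inr x => if x < 2 then big else [set inl x; inr x]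
  | inl y => if y == 0 :> nat then big else if y == 1 :> nat then [set inl y] else [set inl y; inr y] end.
apply: (@ofRel_eqI _ _ _ cl).
- move=> u; apply/setP => v.
  case: u => [x|y]; case: v => [x'|y']; rewrite /cl /big /kerR /kGi /=;
    repeat case: ifP => ?; rewrite !inE /= ?eq_ll ?eq_rr ?eq_lr ?eq_rl ?orbF -?eq_val;
    repeat case: ifP => ?; first [done | apply/idP/idP => ?; lia].
- move=> B; rewrite !inE => /orP [/orP [/eqP -> | /imsetP [x Hx ->]] | /imsetP [t Ht ->]].
  + by exists (inl o0); rewrite /cl /=.
  + exists (inl x); rewrite /cl /=; move: Hx; rewrite inE => /eqP ->; done.
  + exists (inr t); rewrite /cl /=; move: Ht; rewrite inE; case: ifP => //; lia.
- case=> [y|x]; rewrite /cl /=.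
  + case: ifP => h0; rewrite !inE; first by rewrite eqxx.
    case: ifP => h1.
    * apply/orP; left; apply/orP; right; apply/imsetP; exists y => //; by rewrite inE.
    * apply/orP; right; apply/imsetP; exists y => //; rewrite inE; lia.
  + case: ifP => h; rewrite !inE; first by rewrite eqxx.
    apply/orP; right; apply/imsetP; exists x => //; rewrite inE; lia.
Qed.

Lemma gamma12_PI : isPIstar (gamma12 n).
Proof.
rewrite gamma12_ofRel; apply: isPI_ofRel; first exact: kerR_equiv.
case=> [x|y]; rewrite /kerR /=.
- apply/orP; right; apply/andP; split; apply/existsP; first by exists x.
  case: ifP => h; [exists o0 | exists x] => //=; rewrite h.
- case: (ltngtP y 1) => h.
  + apply/orP; right; apply/andP; split; apply/existsP; last by exists y.
    exists o0 => /=; lia.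
  + apply/orP; right; apply/andP; split; apply/existsP; last by exists y.
    by exists y => /=; rewrite ifF //; lia.
  + apply/orP; left; apply/forallP => -[x'|y'] /=; apply/implyP.
      by case: ifP => ?; lia.
    by rewrite eq_rr -eq_val => /eqP H; apply/eqP; lia.
Qed.

Lemma gamma12inv_PI : isPIstar (gamma12inv n).
Proof.
rewrite gamma12inv_ofRel; apply: isPI_ofRel; first exact: kerR_equiv.
case=> [y|x]; rewrite /kerR /=.
- case: (ltngtP y 1) => h.
  + apply/orP; right; apply/andP; split; apply/existsP; first by exists y.
    exists o0 => /=; lia.
  + apply/orP; right; apply/andP; split; apply/existsP; first by exists y.
    by exists y => /=; rewrite ifF //; lia.
  + apply/orP; left; apply/forallP => -[x'|y'] /=; apply/implyP.
      by rewrite eq_ll -eq_val => /eqP H; apply/eqP; lia.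
    by case: ifP => ?; lia.
- apply/orP; right; apply/andP; split; apply/existsP; last by exists x.
  case: ifP => h; [exists o0 | exists x] => //=; rewrite h.
Qed.

End Gam.


Section Fun.
Variable n : nat.
Local Notation T := (pt n).
Local Notation T3 := (pt3 n).

Lemma lev_cases (l : 'I_3) : [\/ l = lev0, l = lev1 | l = lev2].
Proof.
case: l => -[|[|[|k]]] Hl.
- by constructor 1; apply: val_inj.
- by constructor 2; apply: val_inj.
- by constructor 3; apply: val_inj.
- by [].
Qed.

Variables Ra Rb : rel T.
Hypothesis HRa : equivalence_rel Ra.
Hypothesis HRb : equivalence_rel Rb.
Local Notation a := (ofRel Ra).
Local Notation b := (ofRel Rb).
Variable h : 'I_n -> 'I_n.

Section Left.
Hypothesis H1 : forall x, Ra (inl x) (inr (h x)).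
Hypothesis H2 : forall x y, Ra (inr x) (inr y) -> x = y.

Definition rL (w : T3) : T :=
  if val w.2 == 0 then inl (h w.1) else if val w.2 == 1 then inl w.1 else inr w.1.
Definition gL (u : T) : T := match u with inl x => inl (h x) | inr y => inr y end.

Lemma simLF w z : sim a b w z = Rb (rL w) (rL z).
Proof.
pose m (u : T) := match u with inl x => h x | inr y => y end.
have Hm : forall u, Ra u (inr (m u)) by case=> [x|y] /=; [apply: H1 | apply: eqv_refl].
apply: (@sim_char _ _ _ HRa HRb _ Rb rL (fun w => embR (rL w))) => //.
- move=> u v Huv.
  have -> : rL (embL u) = inl (m u) by case: u {Huv}.
  have -> : rL (embL v) = inl (m v) by case: v {Huv}.
  have -> // : m u = m v; last by apply: eqv_refl.
  apply: H2; exact: (eqv_trans HRa (eqv_sym HRa (Hm u)) (eqv_trans HRa Huv (Hm v))).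
- move=> u v Huv.
  have E : forall u, rL (embR u) = u by case.
  by rewrite !E.
- case=> x l; case: (lev_cases l) => -> /=; rewrite /rL /=.
  + exact: (simL Rb HRa (H1 x)).
  + exact: sim_refl.
  + exact: sim_refl.
- by move=> w1 z1 H; apply: (simR Ra HRb).
Qed.

Lemma starR_LF u v : starR a b u v = (u == v) ||
  (Rb (gL u) (gL v) && ~~ ([exists y, singR Ra (inr y) && Rb (gL u) (inl y)] || singR Rb (gL u))).
Proof.
have E : forall u, rL (embO u) = gL u by case.
rewrite /starR simLF !E badclassE //; congr (_ || (_ && ~~ _)); congr orb.
- apply/existsP/existsP => -[v0 /andP [S H]].
  + case: v0 S H => [x|y] S H.
      have := singR_eq S (H1 x); by [].
    by exists y; rewrite S /=; rewrite simLF E in H; exact: H.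
  + by exists (inr v0); rewrite S /= simLF E; exact: H.
- apply/existsP/idP => [[v0 /andP [S H]] | S].
  + rewrite simLF E in H.
    have E2 : rL (embR v0) = v0 by case: v0 {S H}.
    rewrite E2 in H.
    by have := singR_eq S (eqv_sym HRb H) => ->.
  + exists (gL u); rewrite S simLF E.
    have E2 : rL (embR (gL u)) = gL u by case: (gL u).
    by rewrite E2 eqv_refl.
Qed.

End Left.

Section Right.
Hypothesis H1 : forall y, Rb (inr y) (inl (h y)).
Hypothesis H2 : forall x y, Rb (inl x) (inl y) -> x = y.

Definition rR (w : T3) : T :=
  if val w.2 == 0 then inl w.1 else if val w.2 == 1 then inr w.1 else inr (h w.1).
Definition gR (u : T) : T := match u with inl x => inl x | inr y => inr (h y) end.

Lemma simRF w z : sim a b w z = Ra (rR w) (rR z).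
Proof.
pose m (u : T) := match u with inl x => x | inr y => h y end.
have Hm : forall u, Rb u (inl (m u)) by case=> [x|y] /=; [apply: eqv_refl | apply: H1].
apply: (@sim_char _ _ _ HRa HRb _ Ra rR (fun w => embL (rR w))) => //.
- move=> u v Huv.
  have E : forall u, rR (embL u) = u by case.
  by rewrite !E.
- move=> u v Huv.
  have -> : rR (embR u) = inr (m u) by case: u {Huv}.
  have -> : rR (embR v) = inr (m v) by case: v {Huv}.
  have -> // : m u = m v; last by apply: eqv_refl.
  apply: H2; exact: (eqv_trans HRb (eqv_sym HRb (Hm u)) (eqv_trans HRb Huv (Hm v))).
- case=> x l; case: (lev_cases l) => -> /=; rewrite /rR /=.
  + exact: sim_refl.
  + exact: sim_refl.
  + exact: (simR Ra HRb (H1 x)).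
- by move=> w1 z1 H; apply: (simL Rb HRa).
Qed.

Lemma starR_RF u v : starR a b u v = (u == v) ||
  (Ra (gR u) (gR v) && ~~ (singR Ra (gR u) || [exists x, singR Rb (inl x) && Ra (gR u) (inr x)])).
Proof.
have E : forall u, rR (embO u) = gR u by case.
rewrite /starR simRF !E badclassE //; congr (_ || (_ && ~~ _)); congr orb.
- apply/existsP/idP => [[v0 /andP [S H]] | S].
  + rewrite simRF E in H.
    have E2 : rR (embL v0) = v0 by case: v0 {S H}.
    rewrite E2 in H.
    by have := singR_eq S (eqv_sym HRa H) => ->.
  + exists (gR u); rewrite S simRF E.
    have E2 : rR (embL (gR u)) = gR u by case: (gR u).
    by rewrite E2 eqv_refl.
- apply/existsP/existsP => -[v0 /andP [S H]].
  + case: v0 S H => [x|y] S H.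
      by exists x; rewrite S /=; rewrite simRF E in H; exact: H.
    have := singR_eq S (H1 y); by [].
  + by exists (inl v0); rewrite S /= simRF E; exact: H.
Qed.

End Right.
End Fun.


Section Units.
Variable n : nat.
Local Notation T := (pt n).

Lemma pull_equiv (R : rel T) (f : T -> T) : equivalence_rel R -> equivalence_rel (fun u v => R (f u) (f v)).
Proof. by move=> H x y z; split; [apply: eqv_refl H | move=> Hxy; case: (H (f x) (f y) (f z)) => _ /(_ Hxy)]. Qed.

Lemma kU_H1 (s : {perm 'I_n}) x : kerR (kU s) (inl x) (inr (s x)).
Proof. by rewrite /kerR. Qed.
Lemma kU_H2 (s : {perm 'I_n}) x y : kerR (kU s) (inr x) (inr y) -> x = y.
Proof. by rewrite /kerR /= eq_val => /eqP. Qed.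
Lemma kU_nsing (s : {perm 'I_n}) u : singR (kerR (kU s)) u = false.
Proof.
apply/negP => S; case: u S => [x|y] S.
  by have := singR_eq S (kU_H1 s x).
have : kerR (kU s) (inr y) (inl (s^-1 y)%g) by rewrite /kerR /= permKV.
by move/(singR_eq S).
Qed.

Lemma gL_inj (h : 'I_n -> 'I_n) : injective h -> injective (gL h).
Proof. move=> hi [x|y] [x'|y'] //= [E]; by [rewrite (hi _ _ E) | rewrite E]. Qed.
Lemma gR_inj (h : 'I_n -> 'I_n) : injective h -> injective (gR h).
Proof. move=> hi [x|y] [x'|y'] //= [E]; by [rewrite (hi _ _ E) | rewrite E]. Qed.

Lemma star_unitL (s : {perm 'I_n}) (Rb : rel T) : equivalence_rel Rb ->
  star (unitS s) (ofRel Rb) = ofRel (fun u v => Rb (gL s u) (gL s v)).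
Proof.
move=> HB; rewrite unitS_ofRel star_ofRel; apply: ofRel_ext => u v.
rewrite (starR_LF (kerR_equiv _) HB (@kU_H1 s) (@kU_H2 s)).
have -> : [exists y, singR (kerR (kU s)) (inr y) && Rb (gL s u) (inl y)] = false.
  by apply/existsP => -[y]; rewrite kU_nsing.
rewrite /=; case: (eqVneq u v) => [->|ne] /=; first by rewrite eqv_refl.
case S: (singR Rb (gL s u)); rewrite ?andbT //= andbF.
apply/esym/negP => H; move: (singR_eq S H) => /(gL_inj (@perm_inj _ s)) E.
by rewrite E eqxx in ne.
Qed.

Lemma kUi_H1 (s : {perm 'I_n}) y : kerR (kU s) (inr y) (inl ((s^-1)%g y)).
Proof. by rewrite /kerR /= permKV. Qed.
Lemma kUi_H2 (s : {perm 'I_n}) x y : kerR (kU s) (inl x) (inl y) -> x = y.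
Proof. by rewrite /kerR /= eq_val (inj_eq perm_inj) => /eqP. Qed.

Lemma star_unitR (s : {perm 'I_n}) (Ra : rel T) : equivalence_rel Ra ->
  star (ofRel Ra) (unitS s) = ofRel (fun u v => Ra (gR (s^-1)%g u) (gR (s^-1)%g v)).
Proof.
move=> HA; rewrite unitS_ofRel star_ofRel; apply: ofRel_ext => u v.
rewrite (starR_RF HA (kerR_equiv _) (@kUi_H1 s) (@kUi_H2 s)).
have -> : [exists x, singR (kerR (kU s)) (inl x) && Ra (gR (s^-1)%g u) (inr x)] = false.
  by apply/existsP => -[y]; rewrite kU_nsing.
rewrite orbF; case: (eqVneq u v) => [->|ne] /=; first by rewrite eqv_refl.
case S: (singR Ra (gR (s^-1)%g u)); rewrite ?andbT //= andbF.
apply/esym/negP => H; move: (singR_eq S H) => /(gR_inj (@perm_inj _ (s^-1)%g)) E.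
by rewrite E eqxx in ne.
Qed.

End Units.


Section GamPQ.
Variable n : nat.
Hypothesis hn : 2 < n.
Local Notation T := (pt n).
Definition i0 : 'I_n := Ordinal (ltnW (ltnW hn)).
Definition i1 : 'I_n := Ordinal (ltnW hn).

Lemma perm2 (p q i j : 'I_n) : p != q -> i != j ->
  exists s : {perm 'I_n}, s p = i /\ s q = j.
Proof.
move=> pq ij; exists (tperm p i * tperm (tperm p i q) j)%g; rewrite !permM tpermL; split; last by rewrite tpermL.
have H : tperm p i q != i.
  apply: contra pq => /eqP E; apply/eqP.
  by apply: (@perm_inj _ (tperm p i)); rewrite E tpermL.
by rewrite (@tpermD _ (tperm p i q) j i) // eq_sym.
Qed.

Definition kGo (p q : 'I_n) (u : T) : 'I_n := match u with inl x => if x == q then p else x | inr y => y end.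
Definition Gam p q := ofRel (kerR (fun u => nat_of_ord (kGo p q u))).
Definition kGio (p q : 'I_n) (u : T) : 'I_n := match u with inl x => x | inr y => if y == q then p else y end.
Definition GamI p q := ofRel (kerR (fun u => nat_of_ord (kGio p q u))).

Lemma Gam_eq p q (s : {perm 'I_n}) : s p = i0 -> s q = i1 ->
  star (unitS s) (star (gamma12 n) (unitS (s^-1)%g)) = Gam p q.
Proof.
move=> sp sq.
have hn0 : 0 < n by lia.
rewrite (gamma12_ofRel hn0) (star_unitR _ (kerR_equiv _)) (star_unitL _ (pull_equiv _ (kerR_equiv _))).
apply: ofRel_ext => u v; rewrite /kerR invgK.
suff E : forall w, kG (gR s (gL s w)) = s (kGo p q w).
  by rewrite !E eq_val (inj_eq perm_inj).
case=> [x|y] //=.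
case: eqP => [->|ne]; first by rewrite sq sp.
case: ifP => // lt2.
have : (s x == i0) || (s x == i1) by rewrite -!eq_val /=; lia.
case/orP => /eqP E.
  by rewrite -sp in E; move: (perm_inj E) => ->; rewrite sp.
by rewrite -sq in E; move: (perm_inj E).
Qed.

Lemma GamI_eq p q (s : {perm 'I_n}) : s p = i0 -> s q = i1 ->
  star (unitS s) (star (gamma12inv n) (unitS (s^-1)%g)) = GamI p q.
Proof.
move=> sp sq.
have hn0 : 0 < n by lia.
rewrite (gamma12inv_ofRel hn0) (star_unitR _ (kerR_equiv _)) (star_unitL _ (pull_equiv _ (kerR_equiv _))).
apply: ofRel_ext => u v; rewrite /kerR invgK.
suff E : forall w, kGi (gR s (gL s w)) = s (kGio p q w).
  by rewrite !E eq_val (inj_eq perm_inj).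
case=> [x|y] //=.
case: eqP => [->|ne]; first by rewrite sq sp.
case: ifP => // lt2.
have : (s y == i0) || (s y == i1) by rewrite -!eq_val /=; lia.
case/orP => /eqP E.
  by rewrite -sp in E; move: (perm_inj E) => ->; rewrite sp.
by rewrite -sq in E; move: (perm_inj E).
Qed.

End GamPQ.


Section E1.
Variable n : nat.
Hypothesis hn : 2 < n.
Local Notation T := (pt n).
Local Notation T3 := (pt3 n).
Let hn0 : 0 < n. Proof. lia. Qed.

Definition labE (w : T3) : nat :=
  let x := nat_of_ord w.1 in let l := nat_of_ord w.2 in
  if x == 0 then 0 else if x == 1 then (if l == 1 then 0 else if l == 0 then n else n.+1) else x.
Definition kE (u : T) : nat := labE (embO u).
Definition E1 := ofRel (kerR kE).

Definition repOf (k : nat) : T3 :=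
  if k == 0 then (i0 hn, lev1) else if k == n then (i1 hn, lev0)
  else if k == n.+1 then (i1 hn, lev2) else (insubd (i0 hn) k, lev1).

Lemma ord_cases (x : 'I_n) : [\/ x = i0 hn, x = i1 hn | 2 <= x].
Proof.
case: (ltngtP x 1) => h.
- by constructor 1; apply: val_inj => /=; lia.
- by constructor 3.
- by constructor 2; apply: val_inj.
Qed.

Lemma E1_eq : star (gamma12inv n) (gamma12 n) = E1.
Proof.
rewrite (gamma12_ofRel hn0) (gamma12inv_ofRel hn0) star_ofRel /E1; apply: ofRel_ext => u v.
have HA := kerR_equiv (@kGi n); have HB := kerR_equiv (@kG n).
have Hs : forall w z, sim (ofRel (kerR (@kGi n))) (ofRel (kerR (@kG n))) w z = (labE w == labE z).
  apply: (@sim_char _ _ _ HA HB _ (fun a b => a == b) labE (fun w => repOf (labE w))).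
  - by move=> x y z; split => // /eqP ->.
  - move=> u0 v0; rewrite /kerR.
    by case: u0 => [x|y]; case: v0 => [x'|y']; rewrite /labE /=; repeat case: ifP => ?; move=> /eqP ?; apply/eqP; lia.
  - move=> u0 v0; rewrite /kerR.
    by case: u0 => [x|y]; case: v0 => [x'|y']; rewrite /labE /=; repeat case: ifP => ?; move=> /eqP ?; apply/eqP; lia.
  - case=> x l; have xn := ltn_ord x; case: (lev_cases l) => ->; case: (ord_cases x) => [->|->|hx];
      rewrite /labE /=; try (rewrite (_ : (x == 0 :> nat) = false); last lia);
      try (rewrite (_ : (x == 1 :> nat) = false); last lia);
      rewrite /repOf /=; repeat (case: ifP => ?; try (exfalso; lia)); rewrite ?valKd.
    + exact: (simL _ HA (u := inl (i0 hn)) (v := inr (i0 hn))).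
    + exact: sim_refl.
    + apply: (simL _ HA (u := inl x) (v := inr x)); rewrite /kerR /= ifF //; lia.
    + exact: sim_refl.
    + apply: (simL _ HA (u := inr (i1 hn)) (v := inr (i0 hn))); by rewrite /kerR /=.
    + exact: sim_refl.
    + apply: (simR _ HB (u := inr (i0 hn)) (v := inl (i0 hn))); by rewrite /kerR /=.
    + exact: sim_refl.
    + apply: (simR _ HB (u := inr x) (v := inl x)); rewrite /kerR /= ifF //; lia.
  - by move=> w z /eqP ->; apply: sim_refl.
have SA : forall v0, singR (kerR (@kGi n)) v0 = (v0 == inl (i1 hn)).
  case=> [x|y]; rewrite /singR /kerR.
  - case: (ord_cases x) => [->|->|hx].
    + apply/negbTE/negP => /forallP /(_ (inr (i0 hn))) /=; by [].
    + rewrite eqxx; apply/forallP => -[x'|y'] /=; apply/implyP.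
        by move=> /eqP h; rewrite eq_ll; apply/eqP; apply: val_inj; rewrite /= -h.
      by case: ifP => ?; lia.
    + rewrite eq_ll -eq_val /= (_ : (x == 1 :> nat) = false); last lia.
      apply/negbTE/negP => /forallP /(_ (inr x)) /=; rewrite ifF; last lia. by rewrite eqxx.
  - rewrite eq_rl; apply/negbTE/negP => /forallP.
    case: (ltnP y 2) => hy.
      by move=> /(_ (inl (i0 hn))) /=; rewrite ifT.
    by move=> /(_ (inl y)) /=; rewrite ifF; [rewrite eqxx | lia].
have SB : forall v0, singR (kerR (@kG n)) v0 = (v0 == inr (i1 hn)).
  case=> [x|y]; rewrite /singR /kerR.
  - rewrite eq_lr; apply/negbTE/negP => /forallP.
    case: (ltnP x 2) => hx.
      by move=> /(_ (inr (i0 hn))) /=; rewrite ifT.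
    by move=> /(_ (inr x)) /=; rewrite ifF; [rewrite eqxx | lia].
  - case: (ord_cases y) => [->|->|hy].
    + apply/negbTE/negP => /forallP /(_ (inl (i0 hn))) /=; by [].
    + rewrite eqxx; apply/forallP => -[x'|y'] /=; apply/implyP.
        by case: ifP => ?; lia.
      by move=> /eqP h; rewrite eq_rr; apply/eqP; apply: val_inj; rewrite /= -h.
    + rewrite eq_rr -eq_val /= (_ : (y == 1 :> nat) = false); last lia.
      apply/negbTE/negP => /forallP /(_ (inl y)) /=; rewrite ifF; last lia. by rewrite eqxx.
rewrite /starR Hs badclassE //.
have -> : [exists v0, singR (kerR (@kGi n)) v0 && sim (ofRel (kerR (@kGi n))) (ofRel (kerR (@kG n))) (embO u) (embL v0)]
   = (kE u == n).
  apply/existsP/idP => [[v0] | H]; last by exists (inl (i1 hn)); rewrite SA eqxx Hs /= H.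
  by rewrite SA Hs => /andP [/eqP -> ]; rewrite /kE /labE /=.
have -> : [exists v0, singR (kerR (@kG n)) v0 && sim (ofRel (kerR (@kGi n))) (ofRel (kerR (@kG n))) (embO u) (embR v0)]
   = (kE u == n.+1).
  apply/existsP/idP => [[v0] | H]; last by exists (inr (i1 hn)); rewrite SB eqxx Hs /= H.
  by rewrite SB Hs => /andP [/eqP -> ]; rewrite /kE /labE /=.
rewrite /kerR -/(kE u) -/(kE v).
case: (eqVneq u v) => [->|ne]; first by rewrite eqxx.
rewrite /=; case: (eqVneq (kE u) (kE v)) => E //=.
have kEn : forall w, kE w = n -> w = inl (i1 hn).
  case=> [x|y]; rewrite /kE /labE /=.
  - have xn := ltn_ord x; repeat case: ifP => ?; move=> *; try lia.
    by congr inl; apply: val_inj => /=; lia.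
  - have yn := ltn_ord y; repeat case: ifP => ?; move=> *; lia.
have kEn1 : forall w, kE w = n.+1 -> w = inr (i1 hn).
  case=> [x|y]; rewrite /kE /labE /=.
  - have xn := ltn_ord x; repeat case: ifP => ?; move=> *; lia.
  - have yn := ltn_ord y; repeat case: ifP => ?; move=> *; try lia.
    by congr inr; apply: val_inj => /=; lia.
apply/negP => /orP [] /eqP H; move: ne; have H' := H; rewrite E in H'.
  by rewrite (kEn _ H) (kEn _ H') eqxx.
by rewrite (kEn1 _ H) (kEn1 _ H') eqxx.
Qed.

End E1.


Section Iso.
Variable n : nat.
Local Notation T := (pt n).
Variable R : rel T.
Hypothesis HR : equivalence_rel R.
Variable w0 : T.

Definition isoR : rel T := fun u v => (u == v) || [&& u != w0, v != w0 & R u v].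

Lemma isoR_ne w z : w != w0 -> isoR w z = (z != w0) && R w z.
Proof.
move=> ne; rewrite /isoR ne /=; case: eqP => [<-|_] //=.
by rewrite ne eqv_refl.
Qed.

Lemma isoR_equiv : equivalence_rel isoR.
Proof.
move=> x y z; split; first by rewrite /isoR eqxx.
case/orP => [/eqP -> //| /and3P [nx ny Rxy]].
rewrite !isoR_ne //; congr andb; case: (HR x y z) => _ /(_ Rxy) //.
Qed.

Lemma isoR_sing0 : singR isoR w0.
Proof. apply/forallP => v; apply/implyP; rewrite /isoR eqxx /= => /orP [/eqP -> //|] //. Qed.

Definition nsset (r : rel T) := [set u | ~~ singR r u].

Hypothesis Hw : (exists x, inl x != w0 /\ R w0 (inl x)) /\ (exists y, inr y != w0 /\ R w0 (inr y)).

Lemma isoR_sing w : w != w0 -> singR isoR w = singR R w.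
Proof.
move=> ne; apply/idP/idP => S; last first.
  apply/forallP => v; apply/implyP; rewrite isoR_ne // => /andP [_ H].
  by rewrite (singR_eq S H).
apply/forallP => v; apply/implyP => Hv.
case: (eqVneq v w0) => [E | nv]; last by apply/eqP; apply: (singR_eq S); rewrite isoR_ne // nv.
subst v; case: Hw => [[x [nx Hx]] [y [ny Hy]]].
have E1 : inl x = w by apply: (singR_eq S); rewrite isoR_ne // nx (eqv_trans HR Hv Hx).
have E2 : inr y = w by apply: (singR_eq S); rewrite isoR_ne // ny (eqv_trans HR Hv Hy).
by rewrite -E2 in E1.
Qed.

Lemma isoR_PI : PIrel R -> PIrel isoR.
Proof.
move=> PR w; case: (eqVneq w w0) => [->|ne]; first by rewrite isoR_sing0.
rewrite isoR_sing //; case/orP: (PR w) => [-> //| /andP [/existsP [x Hx] /existsP [y Hy]]].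
apply/orP; right; case: Hw => [[x' [nx Hx']] [y' [ny Hy']]].
apply/andP; split; apply/existsP.
- case: (eqVneq (inl x : T) w0) => [E | nx0].
    by exists x'; rewrite isoR_ne // nx; rewrite E in Hx; exact: (eqv_trans HR Hx Hx').
  by exists x; rewrite isoR_ne // nx0.
- case: (eqVneq (inr y : T) w0) => [E | ny0].
    by exists y'; rewrite isoR_ne // ny; rewrite E in Hy; exact: (eqv_trans HR Hy Hy').
  by exists y; rewrite isoR_ne // ny0.
Qed.

Lemma isoR_card : #|nsset isoR| < #|nsset R|.
Proof.
have -> : nsset isoR = nsset R :\ w0.
  apply/setP => w; rewrite !inE; case: (eqVneq w w0) => [->|ne] /=.
    by rewrite isoR_sing0.
  by rewrite isoR_sing.
have w0in : w0 \in nsset R.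
  rewrite inE; case: Hw => [[x [nx Hx]] _]; apply/negP => S.
  by move: (singR_eq S Hx) nx => ->; rewrite eqxx.
by rewrite (cardsD1 w0 (nsset R)) w0in add1n ltnS leqnn.
Qed.

End Iso.


Section CaseAB.
Variable n : nat.
Local Notation T := (pt n).
Variable R : rel T.
Hypothesis HR : equivalence_rel R.
Hypothesis PR : PIrel R.

Lemma final_step (g : T -> T) u v : R u (g u) -> R v (g v) ->
  (u == v) || (R (g u) (g v) && ~~ singR R (g u)) = R u v.
Proof.
move=> Hu Hv.
have -> : R (g u) (g v) = R u v.
  apply/idP/idP => H.
    exact: (eqv_trans HR Hu (eqv_trans HR H (eqv_sym HR Hv))).
  exact: (eqv_trans HR (eqv_sym HR Hu) (eqv_trans HR H Hv)).
case: (eqVneq u v) => [->|ne] /=; first by rewrite eqv_refl.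
case Ruv: (R u v) => //=; apply/negP => S.
have E1 := singR_eq S (eqv_sym HR Hu).
have E2 := singR_eq S (eqv_trans HR (eqv_sym HR Hu) Ruv).
by move: ne; rewrite E2 -E1 eqxx.
Qed.

Variables p q : 'I_n.
Hypothesis pq : p != q.
Definition hq (x : 'I_n) := if x == q then p else x.
Lemma hq_neq x : hq x != q.
Proof. by rewrite /hq; case: (eqVneq x q) => [_|ne]. Qed.

Lemma nonsing_helper w w' : R w w' -> w != w' -> ~~ singR R w.
Proof. by move=> H ne; apply/negP => S; rewrite (singR_eq S H) eqxx in ne. Qed.

Lemma caseA : R (inl p) (inl q) ->
  star (Gam p q) (ofRel (isoR R (inl q))) = ofRel R.
Proof.
move=> Hpq.
have HRa := kerR_equiv (fun u => nat_of_ord (kGo p q u)).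
have HRb := isoR_equiv HR (inl q).
have H1 : forall x, kerR (fun u => nat_of_ord (kGo p q u)) (inl x) (inr (hq x)) by move=> x; rewrite /kerR /hq /=.
have H2 : forall x y, kerR (fun u => nat_of_ord (kGo p q u)) (inr x) (inr y) -> x = y.
  by move=> x y; rewrite /kerR /= eq_val => /eqP.
have Hw : (exists x, inl x != inl q /\ R (inl q) (inl x)) /\ (exists y, inr y != inl q /\ R (inl q) (inr y)).
  split; first by exists p; split; [apply/eqP => -[E]; move: pq; by rewrite E eqxx | exact: (eqv_sym HR Hpq)].
  case/orP: (PR (inl q)) => [S | /andP [_ /existsP [y Hy]]]; last by exists y.
  by move: (singR_eq S (eqv_sym HR Hpq)) pq => [->]; rewrite eqxx.
have F1 : forall u, gL hq u != inl q.
  by case=> [x|y] //=; rewrite eq_ll hq_neq.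
have F5 : forall u, R u (gL hq u).
  case=> [x|y] /=; last exact: (eqv_refl HR).
  rewrite /hq; case: eqP => [->|_]; [exact: (eqv_sym HR Hpq) | exact: (eqv_refl HR)].
rewrite /Gam star_ofRel; apply: ofRel_ext => u v.
rewrite (starR_LF HRa HRb H1 H2).
have -> : [exists y, singR (kerR (fun u => nat_of_ord (kGo p q u))) (inr y) && isoR R (inl q) (gL hq u) (inl y)] = false.
  apply/existsP => -[y /andP [S H]].
  case: (eqVneq y q) => [E | ne].
    by move: H; rewrite E isoR_ne // eqxx.
  have : kerR (fun u => nat_of_ord (kGo p q u)) (inr y) (inl y) by rewrite /kerR /= ifN.
  by move/(singR_eq S).
rewrite /= isoR_sing // isoR_ne // F1 /=.
exact: final_step.
Qed.

Lemma caseB : R (inr p) (inr q) ->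
  star (ofRel (isoR R (inr q))) (GamI p q) = ofRel R.
Proof.
move=> Hpq.
have HRb := kerR_equiv (fun u => nat_of_ord (kGio p q u)).
have HRa := isoR_equiv HR (inr q).
have H1 : forall y, kerR (fun u => nat_of_ord (kGio p q u)) (inr y) (inl (hq y)) by move=> y; rewrite /kerR /hq /=.
have H2 : forall x y, kerR (fun u => nat_of_ord (kGio p q u)) (inl x) (inl y) -> x = y.
  by move=> x y; rewrite /kerR /= eq_val => /eqP.
have Hw : (exists x, inl x != inr q /\ R (inr q) (inl x)) /\ (exists y, inr y != inr q /\ R (inr q) (inr y)).
  split; last by exists p; split; [apply/eqP => -[E]; move: pq; by rewrite E eqxx | exact: (eqv_sym HR Hpq)].
  case/orP: (PR (inr q)) => [S | /andP [/existsP [x Hx] _]]; last by exists x.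
  by move: (singR_eq S (eqv_sym HR Hpq)) pq => [->]; rewrite eqxx.
have F1 : forall u, gR hq u != inr q.
  by case=> [x|y] //=; rewrite eq_rr hq_neq.
have F5 : forall u, R u (gR hq u).
  case=> [x|y] /=; first exact: (eqv_refl HR).
  rewrite /hq; case: eqP => [->|_]; [exact: (eqv_sym HR Hpq) | exact: (eqv_refl HR)].
rewrite /GamI star_ofRel; apply: ofRel_ext => u v.
rewrite (starR_RF HRa HRb H1 H2).
have -> : [exists x, singR (kerR (fun u => nat_of_ord (kGio p q u))) (inl x) && isoR R (inr q) (gR hq u) (inr x)] = false.
  apply/existsP => -[y /andP [S H]].
  case: (eqVneq y q) => [E | ne].
    by move: H; rewrite E isoR_ne // eqxx.
  have : kerR (fun u => nat_of_ord (kGio p q u)) (inl y) (inr y) by rewrite /kerR /= ifN.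
  by move/(singR_eq S).
rewrite orbF isoR_sing // isoR_ne // F1 /=.
exact: final_step.
Qed.

End CaseAB.


Section PB.
Variable n : nat.
Local Notation T := (pt n).
Variable R : rel T.
Hypothesis HR : equivalence_rel R.
Hypothesis PR : PIrel R.
Hypothesis PBl : forall x y, R (inl x) (inl y) -> x = y.
Hypothesis PBr : forall x y, R (inr x) (inr y) -> x = y.

Definition fpb (x : 'I_n) : 'I_n := odflt x [pick y | R (inl x) (inr y)].

Lemma fpb_spec x : ~~ singR R (inl x) -> R (inl x) (inr (fpb x)).
Proof.
move=> ns; rewrite /fpb; case: pickP => [y Hy //| none].
by case/orP: (PR (inl x)) => [S|/andP [_ /existsP [y Hy]]]; [rewrite S in ns | rewrite none in Hy].
Qed.

Lemma nsing_of w w' : R w w' -> w != w' -> ~~ singR R w.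
Proof. by move=> H ne; apply/negP => S; rewrite (singR_eq S H) eqxx in ne. Qed.

Lemma fpb_uniq x y : R (inl x) (inr y) -> fpb x = y.
Proof.
move=> H; have ns : ~~ singR R (inl x) by apply: nsing_of H _.
apply: PBr; exact: (eqv_trans HR (eqv_sym HR (fpb_spec ns)) H).
Qed.

Lemma R_ll x x' : R (inl x) (inl x') = (x == x').
Proof. by apply/idP/eqP => [/PBl | ->]; last exact: eqv_refl. Qed.
Lemma R_rr y y' : R (inr y) (inr y') = (y == y').
Proof. by apply/idP/eqP => [/PBr | ->]; last exact: eqv_refl. Qed.
Lemma R_lr x y : R (inl x) (inr y) = ~~ singR R (inl x) && (fpb x == y).
Proof.
apply/idP/andP => [H | [ns /eqP <-]]; last exact: fpb_spec.
by split; [apply: nsing_of H _ | rewrite (fpb_uniq H)].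
Qed.
Lemma R_rl x y : R (inr y) (inl x) = ~~ singR R (inl x) && (fpb x == y).
Proof. by rewrite eqv_symE // R_lr. Qed.

Definition Pl := [set x | singR R (inl x)].
Definition Pr := [set y | singR R (inr y)].

Lemma card_PlPr : #|Pl| = #|Pr|.
Proof.
have Hinj : {in ~: Pl &, injective fpb}.
  move=> x x'; rewrite !inE => nx nx' E.
  apply: PBl; apply: (eqv_trans HR (fpb_spec nx)); rewrite E eqv_symE //; exact: fpb_spec.
have Eim : fpb @: (~: Pl) = ~: Pr.
  apply/setP => y; rewrite inE; apply/imsetP/idP => [[x]|ny].
    rewrite !inE => nx ->; apply: (@nsing_of _ (inl x)); first by rewrite eqv_symE //; exact: fpb_spec.
    by [].
  case/orP: (PR (inr y)) => [S|/andP [/existsP [x Hx] _]]; first by rewrite inE S in ny.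
  exists x; last by rewrite (fpb_uniq (eqv_sym HR Hx)).
  rewrite !inE; apply: (nsing_of (eqv_sym HR Hx)); by [].
have := card_in_imset Hinj; rewrite Eim => E.
have := cardsC Pl; have := cardsC Pr; rewrite E => <-.
by move/addIn.
Qed.

End PB.


Section C01.
Variable n : nat.
Hypothesis hn : 2 < n.
Local Notation T := (pt n).
Variable R : rel T.
Hypothesis HR : equivalence_rel R.
Hypothesis PR : PIrel R.
Hypothesis PBl : forall x y, R (inl x) (inl y) -> x = y.
Hypothesis PBr : forall x y, R (inr x) (inr y) -> x = y.
Local Notation f := (fpb R).

Lemma singl x : singR R (inl x) = (x \in Pl R). Proof. by rewrite inE. Qed.
Lemma singr y : singR R (inr y) = (y \in Pr R). Proof. by rewrite inE. Qed.

Lemma fpb_nPr x : x \notin Pl R -> f x \notin Pr R.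
Proof.
rewrite -singl -singr => ns; apply: (@nsing_of _ R _ (inl x)).
  by rewrite (eqv_symE HR); apply: fpb_spec.
by [].
Qed.

Lemma caseC0 : Pl R = set0 -> exists s, ofRel R = unitS s.
Proof.
move=> E0.
have ns : forall x, ~~ singR R (inl x) by move=> x; rewrite singl E0 inE.
have finj : injective f.
  move=> x x' E; apply: PBl; apply: (eqv_trans HR (fpb_spec PR (ns x))).
  rewrite E (eqv_symE HR); exact: (fpb_spec PR (ns x')).
exists (perm finj); rewrite unitS_ofRel; apply: ofRel_ext => u v.
rewrite /kerR; case: u => [x|y]; case: v => [x'|y'] /=; rewrite ?permE eq_val.
- by rewrite (R_ll HR PBl) (inj_eq finj).
- by rewrite (R_lr HR PR PBr) (ns x).
- by rewrite (R_rl HR PR PBr) (ns x') eq_sym.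
- by rewrite (R_rr HR PBr).
Qed.

Lemma labE0 (z : 'I_n) : labE (z, lev0) = if z == i1 hn then n else z.
Proof.
rewrite /labE /= -eq_val /=; case: (ltngtP z 1) => h; try lia.
- rewrite ifT; lia.
- by rewrite ifF; lia.
- by rewrite ifF ?eqxx; lia.
Qed.
Lemma labE2 (z : 'I_n) : labE (z, lev2) = if z == i1 hn then n.+1 else z.
Proof.
rewrite /labE /= -eq_val /=; case: (ltngtP z 1) => h; try lia.
- rewrite ifT; lia.
- by rewrite ifF; lia.
- by rewrite ifF ?eqxx; lia.
Qed.

Lemma caseC1 x0 : Pl R = [set x0] ->
  exists s t, ofRel R = star (unitS s) (star (E1 n) (unitS t)).
Proof.
move=> E1x.
have : #|Pr R| = 1 by rewrite -card_PlPr // E1x cards1.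
move/eqP/cards1P => [y0 E1y].
have sl : forall x, singR R (inl x) = (x == x0) by move=> x; rewrite singl E1x inE.
have sr : forall y, singR R (inr y) = (y == y0) by move=> y; rewrite singr E1y inE.
pose s := tperm x0 (i1 hn).
have sx : forall x, (s x == i1 hn) = (x == x0).
  move=> x; apply/eqP/eqP => [H|->]; last by rewrite tpermL.
  by apply: (@perm_inj _ s); rewrite H tpermL.
have sx' : forall z, (s z == x0) = (z == i1 hn) by move=> z; rewrite -sx tpermK.
pose tf z := if z == i1 hn then y0 else f (s z).
have fy0 : forall x, x != x0 -> f x != y0.
  move=> x nx; have := @fpb_nPr x; rewrite E1x E1y !inE => /(_ nx); by [].
have tinj : injective tf.
  move=> z z'; rewrite /tf.
  case: (eqVneq z (i1 hn)) => [->|nz]; case: (eqVneq z' (i1 hn)) => [->|nz'] //.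
  - move=> E; have := fy0 (s z'); rewrite -E eqxx sx' nz'; by move/(_ isT).
  - move=> E; have := fy0 (s z); rewrite E eqxx sx' nz; by move/(_ isT).
  - move=> E; apply: (@perm_inj _ s); apply: PBl.
    have ns : forall z, z != i1 hn -> ~~ singR R (inl (s z)) by move=> w nw; rewrite sl sx'.
    apply: (eqv_trans HR (fpb_spec PR (ns _ nz))); rewrite E (eqv_symE HR); exact: (fpb_spec PR (ns _ nz')).
pose t := perm tinj.
have ti1 : t (i1 hn) = y0 by rewrite permE /tf eqxx.
have tsx : forall x, x != x0 -> t (s x) = f x.
  by move=> x nx; rewrite permE /tf sx (negbTE nx) tpermK.
have tiy : forall y, ((t^-1)%g y == i1 hn) = (y == y0).
  move=> y; apply/eqP/eqP => [H|->]; first by rewrite -(permKV t y) H ti1.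
  by rewrite -ti1 permK.
exists s, t.
rewrite /E1 (star_unitR _ (kerR_equiv _)) (star_unitL _ (pull_equiv _ (kerR_equiv _))).
apply: ofRel_ext => u v; rewrite /kerR /kE.
have kx : forall x, labE (embO (gR (t^-1)%g (gL s (inl x)))) = if x == x0 then n else s x.
  by move=> x; rewrite /= labE0 sx.
have ky : forall y, labE (embO (gR (t^-1)%g (gL s (inr y)))) = if y == y0 then n.+1 else (t^-1)%g y.
  by move=> y; rewrite /= labE2 tiy.
have lt1 := ltn_ord.
case: u => [x|y]; case: v => [x'|y']; rewrite ?kx ?ky.
- rewrite (R_ll HR PBl).
  case: (eqVneq x x0) => [Ex|nx]; case: (eqVneq x' x0) => [Ex'|nx'] /=.
  + by rewrite Ex Ex' !eqxx.
  + rewrite Ex eq_sym (negbTE nx'); apply/esym/eqP; have := lt1 _ (s x'); lia.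
  + rewrite Ex' (negbTE nx); apply/esym/eqP; have := lt1 _ (s x); lia.
  + by rewrite eq_val (inj_eq perm_inj).
- rewrite (R_lr HR PR PBr) sl.
  case: (eqVneq x x0) => [Ex|nx]; case: (eqVneq y' y0) => [Ey|ny'] /=.
  + by apply/esym/eqP; lia.
  + apply/esym/eqP; have := lt1 _ ((t^-1)%g y'); lia.
  + rewrite Ey (negbTE (fy0 _ nx)); apply/esym/eqP; have := lt1 _ (s x); lia.
  + by rewrite eq_val -[s x == _](inj_eq (@perm_inj _ t)) permKV tsx.
- rewrite (R_rl HR PR PBr) sl.
  case: (eqVneq x' x0) => [Ex|nx]; case: (eqVneq y y0) => [Ey|ny] /=.
  + by apply/esym/eqP; lia.
  + apply/esym/eqP; have := lt1 _ ((t^-1)%g y); lia.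
  + rewrite Ey (negbTE (fy0 _ nx)); apply/esym/eqP; have := lt1 _ (s x'); lia.
  + by rewrite eq_val [_ == s x']eq_sym -[s x' == _](inj_eq (@perm_inj _ t)) permKV tsx.
- rewrite (R_rr HR PBr).
  case: (eqVneq y y0) => [Ey|ny]; case: (eqVneq y' y0) => [Ey'|ny'] /=.
  + by rewrite Ey Ey' !eqxx.
  + rewrite Ey eq_sym (negbTE ny'); apply/esym/eqP; have := lt1 _ ((t^-1)%g y'); lia.
  + rewrite Ey' (negbTE ny); apply/esym/eqP; have := lt1 _ ((t^-1)%g y); lia.
  + by rewrite eq_val (inj_eq perm_inj).
Qed.

End C01.


Section C2.
Variable n : nat.
Local Notation T := (pt n).
Variable R : rel T.
Hypothesis HR : equivalence_rel R.
Hypothesis PR : PIrel R.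
Hypothesis PBl : forall x y, R (inl x) (inl y) -> x = y.
Hypothesis PBr : forall x y, R (inr x) (inr y) -> x = y.
Variables p q y0 : 'I_n.
Hypothesis pq : p != q.
Hypothesis Hp : singR R (inl p).
Hypothesis Hq : singR R (inl q).
Hypothesis Hy : singR R (inr y0).

Definition phi (u : T) : T := if u == inr y0 then inl q else u.
Definition R2 : rel T := fun u v => R (phi u) (phi v).

Lemma sing_fix w z : singR R w -> R w z = (w == z).
Proof.
move=> S; apply/idP/eqP => [H|<-]; last exact: eqv_refl.
by rewrite (singR_eq S H).
Qed.

Lemma phi_id u : u != inr y0 -> phi u = u.
Proof. by rewrite /phi => /negbTE ->. Qed.

Lemma R2_equiv : equivalence_rel R2.
Proof. exact: pull_equiv. Qed.

Lemma R2_other u : u != inl q -> u != inr y0 -> singR R2 u = singR R u.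
Proof.
move=> nq ny; apply/idP/idP => S.
- apply/forallP => v; apply/implyP => H.
  case: (eqVneq v (inr y0)) => [E|nv].
    by move: H; rewrite E (eqv_symE HR) sing_fix.
  case: (eqVneq v (inl q)) => [E|nv'].
    by move: H; rewrite E (eqv_symE HR) sing_fix.
  by apply/eqP; apply: (singR_eq S); rewrite /R2 !phi_id.
- apply/forallP => v; apply/implyP; rewrite /R2 phi_id // => H.
  have E := singR_eq S H.
  move: E; rewrite /phi; case: eqP => [_ E|_ -> //].
  by rewrite -E eqxx in nq.
Qed.

Lemma R2_PBl x x' : R2 (inl x) (inl x') -> x = x'.
Proof. by rewrite /R2 !phi_id //; apply: PBl. Qed.

Lemma R2_PBr y y' : R2 (inr y) (inr y') -> y = y'.
Proof.
rewrite /R2 /phi; case: (eqVneq (inr y : T) (inr y0)) => [[->]|ny];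
  case: (eqVneq (inr y' : T) (inr y0)) => [[->]|ny'] //.
- by rewrite sing_fix.
- by rewrite eqv_symE // sing_fix.
- by apply: PBr.
Qed.

Lemma R2_PI : PIrel R2.
Proof.
have Hqy : R2 (inl q) (inr y0) by rewrite /R2 /phi /= eqxx eqv_refl.
move=> u.
case: (eqVneq u (inl q)) => [->|nq].
  apply/orP; right; apply/andP; split; apply/existsP; [exists q; exact: (eqv_refl R2_equiv) | exists y0; exact: Hqy].
case: (eqVneq u (inr y0)) => [->|ny].
  apply/orP; right; apply/andP; split; apply/existsP; [exists q | exists y0].
  - by rewrite (eqv_symE R2_equiv).
  - exact: (eqv_refl R2_equiv).
rewrite R2_other //; case/orP: (PR u) => [-> //|/andP [/existsP [x Hx] /existsP [y Hy']]].
apply/orP; right; apply/andP; split; apply/existsP.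
- by exists x; rewrite /R2 !phi_id.
- exists y; rewrite /R2 !phi_id //; apply/negP => /eqP E.
  by move: Hy'; rewrite E eqv_symE // sing_fix // eq_sym (negbTE ny).
Qed.

Lemma R2_Pl : Pl R2 = Pl R :\ q.
Proof.
apply/setP => x; rewrite !inE.
case: (eqVneq x q) => [->|nx] /=.
  apply/negP => S; have : R2 (inl q) (inr y0) by rewrite /R2 /phi /= eqxx eqv_refl.
  by move/(singR_eq S).
by rewrite R2_other // eq_ll.
Qed.

Lemma caseC2 : star (Gam p q) (ofRel R2) = ofRel R.
Proof.
have HRa := kerR_equiv (fun u => nat_of_ord (kGo p q u)).
have H1 : forall x, kerR (fun u => nat_of_ord (kGo p q u)) (inl x) (inr (hq p q x)) by move=> x; rewrite /kerR /hq /=.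
have H2 : forall x y, kerR (fun u => nat_of_ord (kGo p q u)) (inr x) (inr y) -> x = y.
  by move=> x y; rewrite /kerR /= eq_val => /eqP.
have SA : forall z, singR (kerR (fun u => nat_of_ord (kGo p q u))) (inr z) = (z == q).
  move=> z; case: (eqVneq z q) => [->|nz].
    apply/forallP => -[x|y]; apply/implyP; rewrite /kerR /= ?eq_rr eq_val.
      by rewrite eq_sym; move/eqP => E; move: (hq_neq pq x); rewrite /hq E eqxx.
    by rewrite eq_sym.
  apply/negP => S.
  have : kerR (fun u => nat_of_ord (kGo p q u)) (inr z) (inl z) by rewrite /kerR /= ifN.
  by move/(singR_eq S).
rewrite /Gam star_ofRel; apply: ofRel_ext => u v.
rewrite (starR_LF HRa R2_equiv H1 H2).
have -> : [exists z, singR (kerR (fun u => nat_of_ord (kGo p q u))) (inr z) && R2 (gL (hq p q) u) (inl z)]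
    = R2 (gL (hq p q) u) (inl q).
  apply/existsP/idP => [[z /andP [S H]]|H]; last by exists q; rewrite SA eqxx.
  by move: S H; rewrite SA => /eqP ->.
case: (eqVneq u (inr y0)) => [Eu|nuy].
  rewrite Eu /=.
  have -> : R2 (inr y0) (inl q) = true by rewrite /R2 /phi /= eqxx (eqv_refl HR).
  by rewrite /= andbF orbF sing_fix.
have [Eu|nu] : (u == inl p) || (u == inl q) \/ ~~ ((u == inl p) || (u == inl q)) by case: (_ || _); [left|right].
  have gu : gL (hq p q) u = inl p.
    by case/orP: Eu => /eqP ->; rewrite /= /hq ?eqxx // (negbTE pq).
  have Su : singR R u by case/orP: Eu => /eqP ->.
  rewrite gu R2_other ?Hp //= ?orbT ?andbF ?orbF ?sing_fix //; apply/eqP => -[E]; move: pq; by rewrite E eqxx.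
have gu : gL (hq p q) u = u.
  case: u nuy nu => [x|y] //= _ nu; rewrite /hq; case: eqP => // E.
  by move: nu; rewrite E eqxx orbT.
have nuq : u != inl q by apply: contra nu => ->; rewrite orbT.
have nup : u != inl p by apply: contra nu => ->.
have R2l : forall w, R2 u w = R u (phi w) by move=> w; rewrite /R2 phi_id.
rewrite gu !R2l (_ : phi (inl q) = inl q) // R2_other //.
rewrite (eqv_symE HR u (inl q)) (sing_fix _ Hq) [inl q == u]eq_sym (negbTE nuq) /=.
have -> : R u (phi (gL (hq p q) v)) = R u v.
  case: (eqVneq v (inr y0)) => [->|nvy].
    by rewrite /phi /= eqxx (eqv_symE HR u (inl q)) (eqv_symE HR u (inr y0)) (sing_fix _ Hq) (sing_fix _ Hy) [inl q == u]eq_sym [inr y0 == u]eq_sym (negbTE nuq) (negbTE nuy).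
  case: (eqVneq v (inl p)) => [->|nvp].
    by rewrite /= /hq (negbTE pq) /phi /=.
  case: (eqVneq v (inl q)) => [->|nvq].
    by rewrite /= /hq eqxx /phi /= (eqv_symE HR u (inl p)) (eqv_symE HR u (inl q)) (sing_fix _ Hp) (sing_fix _ Hq) [inl p == u]eq_sym [inl q == u]eq_sym (negbTE nup) (negbTE nuq).
  have -> : gL (hq p q) v = v.
    case: v nvy nvp nvq => [x|y] //= _ _ nvq; rewrite /hq; case: eqP => // E.
    by move: nvq; rewrite E eqxx.
  by rewrite phi_id.
case: (eqVneq u v) => [->|ne] /=; first by rewrite eqv_refl.
case Ruv: (R u v) => //=; apply/negP => S.
by rewrite (singR_eq S Ruv) eqxx in ne.
Qed.

End C2.


Section Main.
Variable n : nat.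
Hypothesis hn : 2 < n.
Local Notation T := (pt n).
Local Notation G := (gen (@gens n)).

Lemma gen_unit (s : {perm 'I_n}) : G (unitS s).
Proof. by apply: gen_base; left; exists s. Qed.
Lemma gen_g : G (gamma12 n).
Proof. by apply: gen_base; right; left. Qed.
Lemma gen_gi : G (gamma12inv n).
Proof. by apply: gen_base; right; right. Qed.

Lemma i01 : i0 hn != i1 hn. Proof. by []. Qed.

Lemma gen_Gam (p q : 'I_n) : p != q -> G (Gam p q).
Proof.
move=> pq; case: (perm2 pq i01) => s [sp sq].
rewrite -(Gam_eq sp sq); apply: gen_mul; first exact: gen_unit.
apply: gen_mul; [exact: gen_g | exact: gen_unit].
Qed.

Lemma gen_GamI (p q : 'I_n) : p != q -> G (GamI p q).
Proof.
move=> pq; case: (perm2 pq i01) => s [sp sq].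
rewrite -(GamI_eq sp sq); apply: gen_mul; first exact: gen_unit.
apply: gen_mul; [exact: gen_gi | exact: gen_unit].
Qed.

Lemma gen_E1 : G (E1 n).
Proof. rewrite -(E1_eq hn); apply: gen_mul; [exact: gen_gi | exact: gen_g]. Qed.

Lemma pb_complete m (R : rel T) : equivalence_rel R -> PIrel R ->
  (forall x y, R (inl x) (inl y) -> x = y) -> (forall x y, R (inr x) (inr y) -> x = y) ->
  #|Pl R| < m -> G (ofRel R).
Proof.
elim: m R => // m IH R HR PR PBl PBr hm.
case: (ltngtP #|Pl R| 1) => hk.
- have E0 : Pl R = set0 by apply/eqP; rewrite -cards_eq0; lia.
  by case: (caseC0 HR PR PBl PBr E0) => s ->; apply: gen_unit.
- have [p Pp] : exists p, p \in Pl R by apply/set0Pn; rewrite -card_gt0; lia.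
  have [q Pq] : exists q, q \in Pl R :\ p.
    by apply/set0Pn; rewrite -card_gt0 (cardsD1 p) Pp in hk *; lia.
  have [y0 Py] : exists y0, y0 \in Pr R.
    by apply/set0Pn; rewrite -card_gt0 -(card_PlPr HR PR PBl PBr); lia.
  move: Pq; rewrite !inE => /andP [qp Hq]; rewrite inE in Pp; rewrite inE in Py.
  have pq : p != q by rewrite eq_sym.
  rewrite -(caseC2 HR pq Pp Hq Py); apply: gen_mul; first exact: gen_Gam.
  apply: IH.
  + exact: R2_equiv.
  + exact: R2_PI.
  + move=> x y; exact: R2_PBl.
  + move=> x y; exact: R2_PBr.
  + rewrite (R2_Pl HR Hq Py); move: hm; rewrite (cardsD1 q (Pl R)).
    have -> : q \in Pl R by rewrite inE.
    by move=> ?; lia.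
- move/eqP/cards1P: hk => [x0 E].
  case: (caseC1 hn HR PR PBl PBr E) => s [t ->].
  apply: gen_mul; first exact: gen_unit.
  apply: gen_mul; [exact: gen_E1 | exact: gen_unit].
Qed.

Lemma main_complete m (R : rel T) : equivalence_rel R -> PIrel R ->
  #|nsset R| < m -> G (ofRel R).
Proof.
elim: m R => // m IH R HR PR hm.
case: (boolP [exists p, exists q, (p != q) && R (inl p) (inl q)]) => [|nA].
  case/existsP => p /existsP [q /andP [pq Hpq]].
  have Hw : (exists x, inl x != (inl q : T) /\ R (inl q) (inl x)) /\
            (exists y, inr y != (inl q : T) /\ R (inl q) (inr y)).
    split; first by exists p; split; [apply/eqP => -[E]; move: pq; rewrite E eqxx | exact: (eqv_sym HR Hpq)].
    case/orP: (PR (inl q)) => [S | /andP [_ /existsP [y Hy]]]; last by exists y.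
    by move: (singR_eq S (eqv_sym HR Hpq)) pq => [->]; rewrite eqxx.
  rewrite -(caseA HR PR pq Hpq); apply: gen_mul; first exact: gen_Gam.
  apply: IH; [exact: isoR_equiv | exact: isoR_PI | ].
  have := isoR_card HR Hw; by move=> h; apply: leq_trans h _; rewrite -ltnS.
case: (boolP [exists p, exists q, (p != q) && R (inr p) (inr q)]) => [|nB].
  case/existsP => p /existsP [q /andP [pq Hpq]].
  have Hw : (exists x, inl x != (inr q : T) /\ R (inr q) (inl x)) /\
            (exists y, inr y != (inr q : T) /\ R (inr q) (inr y)).
    split; last by exists p; split; [apply/eqP => -[E]; move: pq; rewrite E eqxx | exact: (eqv_sym HR Hpq)].
    case/orP: (PR (inr q)) => [S | /andP [/existsP [x Hx] _]]; last by exists x.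
    by move: (singR_eq S (eqv_sym HR Hpq)) pq => [->]; rewrite eqxx.
  rewrite -(caseB HR PR pq Hpq); apply: gen_mul; last exact: gen_GamI.
  apply: IH; [exact: isoR_equiv | exact: isoR_PI | ].
  have := isoR_card HR Hw; by move=> h; apply: leq_trans h _; rewrite -ltnS.
apply: (@pb_complete (#|Pl R|).+1) => //.
- move=> x y H; apply/eqP; apply: contraR nA => ne.
  by apply/existsP; exists x; apply/existsP; exists y; rewrite ne H.
- move=> x y H; apply/eqP; apply: contraR nB => ne.
  by apply/existsP; exists x; apply/existsP; exists y; rewrite ne H.
Qed.

End Main.

Unset Implicit Arguments.

Theorem mainTheorem18 (n : nat) (hn : (3 <= n)%N) (a : PIpart n) :
  isPIstar a <-> gen (@gens n) a.
Proof.
split.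
- case/isPI_rel => Ea HA PA; rewrite Ea.
  exact: (@main_complete n hn (#|nsset (same a)|).+1).
- elim => [b Gb | b c _ Hb _ Hc]; last exact: star_PI.
  have hn0 : 0 < n by lia.
  case: Gb => [[s ->] | [-> | ->]].
  + exact: unitS_PI.
  + exact: gamma12_PI.
  + exact: gamma12inv_PI.
Qed.
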